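(* At the ice point $t=1$, $\Delta=1/2$, let $N\ge1$, $1\le s\le N$, and $r=N-s$. Define $$\mathcal J(z_1,\dots,z_s)=\prod_{j=1}^{s}\frac{z_j^{s-j}}{z_j^{s}(z_j-1)^{s-j+1}}\prod_{1\le j<k\le s}\frac{z_j-z_k}{1- z_k+z_jz_k}\;h_{N,s}(z_1,\dots,z_s).$$ Then the iterated residue at $z=0$ (taken first in $z_s$, ..., finally in $z_1$) is $$\operatorname*{res}_{z_1=0}\cdots\operatorname*{res}_{z_s=0}\mathcal J(z_1,\dots,z_s)=(-1)^s\,h_N(0)\,h_{N-1}(0)\cdots h_{N-s+1}(0).$$
   Context: At the ice point, for $N\ge1$, $h_N(z)={}_2F_1(-N+1,N;2N;1-z)=\sum_{r=1}^N H_N^{(r)}z^{r-1}$, where $H_N^{(r)}=\binom{N+r-2}{N-1}\binom{2N-1-r}{N-1}\big/\binom{3N-2}{N-1}$; it is a polynomial of degree $N-1$ with $h_N(1)=1$ and $z^{N-1}h_N(1/z)=h_N(z)$. For $1\le s\le N$, $$h_{N,s}(z_1,\dots,z_s)=\frac{\det\big[(z_j-1)^{s-i}z_j^{i-1}h_{N-i+1}(z_j)\big]_{i,j=1}^{s}}{\prod_{1\le i<j\le s}(z_i-z_j)}.$$ *)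

(* Defs.v *)
From HB Require Import structures.
From mathcomp Require Import all_boot all_order all_algebra.
From mathcomp Require Import fraction.
Set Implicit Arguments. Unset Strict Implicit. Unset Printing Implicit Defensive.
Import Order.TTheory GRing.Theory Num.Theory.
Local Open Scope ring_scope.

(* For f = p/q in K(X) (q <> 0) write q = X^m * q0 with q0(0) <> 0
   (m = multiplicity of the root 0 of q).  Put c = q0(0), g = 1 - q0/c,
   so that u = c^-1 * sum_{k<m} g^k is the inverse of q0 modulo X^m.
   Then f = (p * u mod X^m)/X^m + (holomorphic at 0), and the residue at 0
   (coefficient of X^-1 of the Laurent expansion) is the coefficient of
   X^(m-1) in p*u (and 0 if m = 0). *)
Definition res0_ratio (K : fieldType) (p q : {poly K}) : K :=
  let m := mup 0 q in
  let q0 := q %/ 'X^m in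
  let c := q0.[0] in
  let g := 1 - c^-1 *: q0 in
  let u := c^-1 *: \sum_(k < m) g ^+ k in
  if m is m'.+1 then (p * u)`_m' else 0.

Definition res0 (K : fieldType) (f : {fraction {poly K}}) : K :=
  res0_ratio \n_(repr f) \d_(repr f).

(* RF R n = R(z_1,...,z_n), built as R(z_1)(z_2)...(z_n): the outermost
   indeterminate of RF R n.+1 = RF R n (z_{n+1}) is z_{n+1}. *)
Fixpoint RF (R : fieldType) (n : nat) : fieldType :=
  match n with
  | 0 => R
  | n'.+1 => ({fraction {poly RF R n'}} : fieldType)
  end.

Definition up (R : fieldType) (n : nat) (x : RF R n) : RF R n.+1 :=
  FracField.tofrac (x%:P).

Fixpoint cst (R : fieldType) (n : nat) : R -> RF R n :=
  match n return R -> RF R n with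
  | 0 => fun a => a
  | n'.+1 => fun a => @up R n' (cst n' a)
  end.

(* variable z_{i+1} (0-based index i < n) in RF R n *)
Fixpoint var (R : fieldType) (n : nat) (i : nat) : RF R n :=
  match n return RF R n with
  | 0 => 0
  | n'.+1 => if i == n' then (FracField.tofrac ('X : {poly RF R n'}) : RF R n'.+1)
             else @up R n' (var R n' i)
  end.

(* iterated residue: res_{z_1=0} ... res_{z_n=0}, taken first in z_n *)
Fixpoint iter_res (R : fieldType) (n : nat) : RF R n -> R :=
  match n return RF R n -> R with
  | 0 => fun x => x
  | n'.+1 => fun x => iter_res (@res0 (RF R n') x)
  end.

Definition Hcoef (R : fieldType) (N r : nat) : R :=
  ('C(N + r - 2, N - 1)%:R * 'C(2 * N - 1 - r, N - 1)%:R)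
    / 'C(3 * N - 2, N - 1)%:R.

Definition hN (R : fieldType) (N : nat) : {poly R} :=
  \sum_(r < N) Hcoef R N r.+1 *: 'X^r.

Definition hN_at (R : fieldType) (n N : nat) (z : RF R n) : RF R n :=
  (map_poly (@cst R n) (hN R N)).[z].

Definition hNs (R : fieldType) (N s : nat) : RF R s :=
  \det (\matrix_(i < s, j < s)
          ((var R s j - 1) ^+ (s - 1 - i) * var R s j ^+ i
             * hN_at (N - i) (var R s j)))
  / \prod_(i < s) \prod_(j < s | (i < j)%N) (var R s i - var R s j).

Definition Jfun (R : fieldType) (N s : nat) : RF R s :=
  let z := var R s in
  (\prod_(j < s) (z j ^+ (s - 1 - j) / (z j ^+ s * (z j - 1) ^+ (s - j))))
  * (\prod_(j < s) \prod_(k < s | (j < k)%N)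
        ((z j - z k) / (1 - z k + z j * z k)))
  * hNs R N s.

(* Main.v *)
Require Import Defs.
From HB Require Import structures.
From mathcomp Require Import all_boot all_order all_algebra.
From mathcomp Require Import fingroup perm.
From mathcomp Require Import generic_quotient fraction ring zify.
Import Order.TTheory GRing.Theory Num.Theory.
Local Open Scope ring_scope.
Set Implicit Arguments. Unset Strict Implicit. Unset Printing Implicit Defensive.

Local Open Scope quotient_scope.

Section Res.
Variable K : fieldType.
Local Notation tf := (@FracField.tofrac {poly K}).
Implicit Types p q r v d : {poly K}.

Definition uinv q0 m : {poly K} :=
  q0.[0]^-1 *: \sum_(k < m) (1 - q0.[0]^-1 *: q0) ^+ k.

Definition Rm p q0 m : K := if m is m'.+1 then (p * uinv q0 m)`_m' else 0.

Lemma mup0X m q0 : q0.[0] != 0 -> mup 0 ('X^m * q0) = m.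
Proof.
move=> h; rewrite mupMl; last by rewrite /root.
by rewrite -[X in mup _ (X ^+ _)]subr0 -polyC0 mup_XsubCX eqxx.
Qed.

Lemma res0_ratio_XM p q0 m : q0.[0] != 0 ->
  res0_ratio p ('X^m * q0) = Rm p q0 m.
Proof.
move=> h; rewrite /res0_ratio mup0X // mulKp ?monic_neq0 ?monicXn //.
Qed.

Lemma uinvP q0 m : q0.[0] != 0 -> 'X^m %| (uinv q0 m * q0 - 1).
Proof.
move=> h; set c := q0.[0]; set g := 1 - c^-1 *: q0.
have -> : uinv q0 m * q0 - 1 = - g ^+ m.
  rewrite /uinv -/c -/g; set S := \sum_(k < m) _.
  rewrite -scalerAl scalerAr mulrC.
  have -> : c^-1 *: q0 = - (g - 1) by rewrite /g opprB opprB addrC subrK.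
  by rewrite mulNr -subrX1 opprB addrAC subrr add0r.
rewrite dvdpNr; apply: dvdp_exp2r.
have -> : ('X : {poly K}) = 'X - 0%:P by rewrite polyC0 subr0.
rewrite dvdp_XsubCl /root /g !hornerE /c mulVf // subrr //.
Qed.

Lemma dvdXn_coef m d i : 'X^m %| d -> (i < m)%N -> d`_i = 0.
Proof.
move=> /dvdpP [qq ->] lt; by rewrite coefMXn lt.
Qed.

Lemma Rm_char p q0 m v : q0.[0] != 0 -> 'X^m %| (v * q0 - 1) ->
  Rm p q0 m = if m is m'.+1 then (p * v)`_m' else 0.
Proof.
move=> h hv; case: m hv => [//|m'] hv; rewrite /Rm.
have hu := @uinvP q0 m'.+1 h.
have cop : coprimep ('X^(m'.+1)) q0.
  apply: coprimep_expl; rewrite coprimep_sym.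
  have -> : ('X : {poly K}) = 'X - 0%:P by rewrite polyC0 subr0.
  by rewrite coprimep_XsubC /root.
have : 'X^(m'.+1) %| (uinv q0 m'.+1 - v) * q0.
  have -> : (uinv q0 m'.+1 - v) * q0 = (uinv q0 m'.+1 * q0 - 1) - (v * q0 - 1).
    by rewrite mulrBl opprB addrA subrK.
  exact: dvdp_sub.
rewrite Gauss_dvdpl // => d.
apply/eqP; rewrite -subr_eq0 -coefB -mulrBr; apply/eqP.
apply: (@dvdXn_coef m'.+1) => //. exact: dvdp_mull.
Qed.

Lemma dvdX p : ('X %| p) = (p.[0] == 0).
Proof. by have := dvdp_XsubCl p 0; rewrite polyC0 subr0. Qed.

Lemma mup_geq0 q n : q != 0 -> (n <= mup 0 q)%N = ('X^n %| q).
Proof. by move=> h; have := mup_geq 0 n h; rewrite polyC0 subr0. Qed.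

Lemma decompX q : q != 0 -> exists m q0, q0.[0] != 0 /\ q = 'X^m * q0.
Proof.
move=> qn0; exists (mup 0 q), (q %/ 'X^(mup 0 q)).
have dv : 'X^(mup 0 q) %| q by rewrite -mup_geq0.
split; last by rewrite divpKC.
apply/negP => /eqP r0.
have : 'X^((mup 0 q).+1) %| q.
  move: (divpKC dv) r0; set m := mup 0 q; set q0 := q %/ _ => e r0.
  by rewrite -e exprSr dvdp_mul // dvdX r0.
by rewrite -mup_geq0 // ltnn.
Qed.

Lemma shuf4 p a b u : p * (a * b) * u = a * (p * b * u).
Proof. by ring. Qed.

Lemma Rm_scale p q0 r0 m k : q0.[0] != 0 -> r0.[0] != 0 ->
  Rm (p * ('X^k * r0)) (q0 * r0) (m + k) = Rm p q0 m.
Proof.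
move=> hq hr.
have hqr : (q0 * r0).[0] != 0 by rewrite hornerM mulf_neq0.
have hu := @uinvP (q0 * r0) (m + k) hqr.
case: m hu => [|m'] hu.
  case: k {hu} => [//|k] /=; rewrite /Rm.
  by rewrite shuf4 coefXnM ltnSn.
rewrite (@Rm_char p q0 m'.+1 (r0 * uinv (q0 * r0) (m'.+1 + k))) //; last first.
  have -> : r0 * uinv (q0 * r0) (m'.+1 + k) * q0 - 1
      = uinv (q0 * r0) (m'.+1 + k) * (q0 * r0) - 1 by ring.
  exact: (dvdp_trans (dvdp_exp2l _ (leq_addr k m'.+1)) hu).
rewrite /Rm addSn shuf4 coefXnM.
rewrite ltnNge leq_addl /= addnK.
by rewrite mulrA.
Qed.

Lemma res0_ratio_scale p q r : q != 0 -> r != 0 ->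
  res0_ratio (p * r) (q * r) = res0_ratio p q.
Proof.
move=> /decompX [m [q0 [hq ->]]] /decompX [k [r0 [hr ->]]].
have hqr : (q0 * r0).[0] != 0 by rewrite hornerM mulf_neq0.
rewrite !res0_ratio_XM //.
have -> : 'X^m * q0 * ('X^k * r0) = 'X^(m + k) * (q0 * r0).
  by rewrite exprD; ring.
by rewrite res0_ratio_XM // Rm_scale.
Qed.

Lemma frac_repr (f : {fraction {poly K}}) :
  f = tf (\n_(repr f)) / tf (\d_(repr f)).
Proof.
rewrite -[f in LHS]reprK.
set x := repr f.
unlock FracField.tofrac.
rewrite !piE; apply/eqmodP=> /=.
rewrite /FracField.mulf /FracField.invf !numden_Ratio ?oner_neq0 ?denom_ratioP //.
rewrite mulr1 mul1r Ratio_numden. exact: FracField.equivf_refl.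
Qed.

Lemma frac_ex (f : {fraction {poly K}}) : exists p q, q != 0 /\ f = tf p / tf q.
Proof. by exists (\n_(repr f)), (\d_(repr f)); rewrite denom_ratioP -frac_repr. Qed.

Lemma res0_frac p q : q != 0 -> res0 (tf p / tf q) = res0_ratio p q.
Proof.
move=> qn0; rewrite /res0; set f := tf p / tf q.
have e := frac_repr f.
move: e; set n := \n_(repr f); set d := \d_(repr f) => e.
have dn0 : d != 0 := denom_ratioP _.
have hd : tf d != 0 by rewrite tofrac_eq0.
have hq : tf q != 0 by rewrite tofrac_eq0.
have : tf (n * q) = tf (d * p).
  rewrite !tofracM -[tf n](divfK hd) -e /f.
  by rewrite mulrAC divfK // mulrC.
move/eqP; rewrite tofrac_eq => /eqP E.
rewrite -(@res0_ratio_scale n d q dn0 qn0) E mulrC.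
by rewrite [d * q]mulrC res0_ratio_scale.
Qed.

Lemma res0_ratioD p1 p2 q : res0_ratio (p1 + p2) q = res0_ratio p1 q + res0_ratio p2 q.
Proof. by rewrite /res0_ratio; case: (mup 0 q) => [|m]; rewrite ?addr0 // mulrDl coefD. Qed.

Lemma res0_ratioCM c p q : res0_ratio (c%:P * p) q = c * res0_ratio p q.
Proof. by rewrite /res0_ratio; case: (mup 0 q) => [|m]; rewrite ?mulr0 // -mulrA coefCM. Qed.

End Res.

Section Res2.
Variable K : fieldType.
Local Notation tf := (@FracField.tofrac {poly K}).
Implicit Types p q r v d : {poly K}.
Lemma res0D (f g : {fraction {poly K}}) : res0 (f + g) = res0 f + res0 g.
Proof.
have [p1 [q1 [h1 ->]]] := frac_ex f.
have [p2 [q2 [h2 ->]]] := frac_ex g.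
have h12 : q1 * q2 != 0 by rewrite mulf_neq0.
have hq1 : tf q1 != 0 by rewrite tofrac_eq0.
have hq2 : tf q2 != 0 by rewrite tofrac_eq0.
have -> : tf p1 / tf q1 + tf p2 / tf q2 = tf (p1 * q2 + p2 * q1) / tf (q1 * q2).
  by rewrite (addf_div _ _ hq1 hq2) tofracD !tofracM.
rewrite !res0_frac // res0_ratioD -(@res0_ratio_scale K p1 q1 q2 h1 h2).
rewrite [q1 * q2]mulrC -(@res0_ratio_scale K p2 q2 q1 h2 h1) //.
Qed.

Lemma res0CM c (f : {fraction {poly K}}) : res0 (tf c%:P * f) = c * res0 f.
Proof.
have [p [q [h ->]]] := frac_ex f.
by rewrite mulrA -tofracM !res0_frac // res0_ratioCM.
Qed.

Lemma res0_hol p q : q.[0] != 0 -> res0 (tf p / tf q) = 0.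
Proof.
move=> h; have qn0 : q != 0 by apply: contraNneq h => ->; rewrite horner0.
by rewrite res0_frac // -[q]mul1r -(expr0 'X) res0_ratio_XM.
Qed.

Lemma res0_simple p q : q.[0] != 0 -> res0 (tf p / tf ('X * q)) = p.[0] / q.[0].
Proof.
move=> h; have qn0 : q != 0 by apply: contraNneq h => ->; rewrite horner0.
rewrite res0_frac ?mulf_neq0 ?polyX_eq0 //.
rewrite -(expr1 'X) res0_ratio_XM // /Rm /uinv big_ord1 expr0.
by rewrite -scalerAr coefZ mulr1 -horner_coef0 mulrC.
Qed.
End Res2.

Local Close Scope quotient_scope.

Section RFsec.
Variable R : fieldType.

Lemma up_is_zmod n : zmod_morphism (@up R n).
Proof. by move=> x y; rewrite /up polyCB tofracB. Qed.
Lemma up_is_monoid n : monoid_morphism (@up R n).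
Proof. by split; [rewrite /up tofrac1 | move=> x y; rewrite /up polyCM tofracM]. Qed.
HB.instance Definition _ n := GRing.isZmodMorphism.Build (RF R n) (RF R n.+1) (@up R n) (@up_is_zmod n).
HB.instance Definition _ n := GRing.isMonoidMorphism.Build (RF R n) (RF R n.+1) (@up R n) (@up_is_monoid n).

Lemma cst_is_zmod n : zmod_morphism (@cst R n).
Proof. elim: n => [//|n IH] x y /=; by rewrite IH rmorphB. Qed.
Lemma cst_is_monoid n : monoid_morphism (@cst R n).
Proof.
elim: n => [//|n [IH1 IH2]]; split => /=; first by rewrite IH1 rmorph1.
by move=> x y; rewrite IH2 rmorphM.
Qed.
HB.instance Definition _ n := GRing.isZmodMorphism.Build R (RF R n) (@cst R n) (@cst_is_zmod n).
HB.instance Definition _ n := GRing.isMonoidMorphism.Build R (RF R n) (@cst R n) (@cst_is_monoid n).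

Fixpoint Reg (n : nat) : RF R n -> Prop :=
  match n return RF R n -> Prop with
  | 0 => fun _ => True
  | n'.+1 => fun x => exists p : {poly RF R n'},
               (forall i, Reg p`_i) /\ x = FracField.tofrac p
  end.

Definition RegP n (p : {poly RF R n}) := forall i, Reg p`_i.

Lemma Reg_cl n : [/\ Reg (0 : RF R n), Reg (1 : RF R n),
  (forall x y : RF R n, Reg x -> Reg y -> Reg (x + y)),
  (forall x y : RF R n, Reg x -> Reg y -> Reg (x * y)) &
  (forall x : RF R n, Reg x -> Reg (- x))].
Proof.
elim: n => [//|n [R0 R1 RD RM RN]]; split.
- by exists 0; split => [i|]; rewrite ?coef0 ?tofrac0.
- exists (1 : {poly RF R n}); split; last by rewrite tofrac1.
  by move=> i; rewrite coef1; case: (i == 0); [exact: R1 | exact: R0].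
- move=> x y /= [p [hp ->]] [q [hq ->]]; exists (p + q); split; last by rewrite tofracD.
  by move=> i; rewrite coefD; apply: RD.
- move=> x y /= [p [hp ->]] [q [hq ->]]; exists (p * q); split; last by rewrite tofracM.
  move=> i; rewrite coefM; elim/big_ind: _ => //; auto.
- move=> x /= [p [hp ->]]; exists (- p); split; last by rewrite tofracN.
  by move=> i; rewrite coefN; apply: RN.
Qed.

Lemma Reg0 n : Reg (0 : RF R n). Proof. by case: (Reg_cl n). Qed.
Lemma Reg1 n : Reg (1 : RF R n). Proof. by case: (Reg_cl n). Qed.
Lemma RegD n (x y : RF R n) : Reg x -> Reg y -> Reg (x + y). Proof. by case: (Reg_cl n) => _ _ h _ _; apply: h. Qed.
Lemma RegM n (x y : RF R n) : Reg x -> Reg y -> Reg (x * y). Proof. by case: (Reg_cl n) => _ _ _ h _; apply: h. Qed.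
Lemma RegN n (x : RF R n) : Reg x -> Reg (- x). Proof. by case: (Reg_cl n) => _ _ _ _ h; apply: h. Qed.
Lemma RegB n (x y : RF R n) : Reg x -> Reg y -> Reg (x - y). Proof. by move=> a b; apply: RegD => //; apply: RegN. Qed.

Lemma Reg_sum n (I : Type) (r : seq I) (P : pred I) (F : I -> RF R n) :
  (forall i, P i -> Reg (F i)) -> Reg (\sum_(i <- r | P i) F i).
Proof. move=> h; elim/big_ind: _ => //; [exact: Reg0 | exact: RegD]. Qed.
Lemma Reg_prod n (I : Type) (r : seq I) (P : pred I) (F : I -> RF R n) :
  (forall i, P i -> Reg (F i)) -> Reg (\prod_(i <- r | P i) F i).
Proof. move=> h; elim/big_ind: _ => //; [exact: Reg1 | exact: RegM]. Qed.
Lemma RegX n (x : RF R n) k : Reg x -> Reg (x ^+ k).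
Proof. by move=> h; elim: k => [|k IH]; [rewrite expr0; exact: Reg1 | rewrite exprS; exact: RegM]. Qed.

Lemma Reg_up n (x : RF R n) : Reg x -> Reg (up x).
Proof. move=> h; exists x%:P; split => // i; rewrite coefC; case: (i == 0) => //; exact: Reg0. Qed.

Lemma Reg_cst n c : Reg (cst n c).
Proof. elim: n => [//|n IH]; exact: Reg_up. Qed.

Lemma Reg_X n : Reg (FracField.tofrac ('X : {poly RF R n}) : RF R n.+1).
Proof.
exists 'X; split => // i; rewrite coefX; case: (i == 1); [exact: Reg1 | exact: Reg0].
Qed.

Lemma var_top n : var R n.+1 n = FracField.tofrac ('X : {poly RF R n}).
Proof. by rewrite /= eqxx. Qed.

Lemma var_up n j : j != n -> var R n.+1 j = up (var R n j).
Proof. by move=> h; rewrite /= (negbTE h). Qed.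

Lemma Reg_var n j : Reg (var R n j).
Proof.
elim: n => [|n IH]; first by [].
case: (eqVneq j n) => [->|h]; first by rewrite var_top; exact: Reg_X.
by rewrite var_up //; apply: Reg_up.
Qed.

Lemma RegP0 n : RegP (0 : {poly RF R n}). Proof. by move=> i; rewrite coef0; exact: Reg0. Qed.
Lemma RegPC n (c : RF R n) : Reg c -> RegP c%:P.
Proof. by move=> h i; rewrite coefC; case: (i == 0) => //; exact: Reg0. Qed.
Lemma RegP1 n : RegP (1 : {poly RF R n}). Proof. exact: RegPC (Reg1 n). Qed.
Lemma RegPX n : RegP ('X : {poly RF R n}).
Proof. by move=> i; rewrite coefX; case: (i == 1); [exact: Reg1 | exact: Reg0]. Qed.
Lemma RegPD n (p q : {poly RF R n}) : RegP p -> RegP q -> RegP (p + q).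
Proof. by move=> a b i; rewrite coefD; apply: RegD. Qed.
Lemma RegPN n (p : {poly RF R n}) : RegP p -> RegP (- p).
Proof. by move=> a i; rewrite coefN; apply: RegN. Qed.
Lemma RegPB n (p q : {poly RF R n}) : RegP p -> RegP q -> RegP (p - q).
Proof. by move=> a b; apply: RegPD => //; apply: RegPN. Qed.
Lemma RegPM n (p q : {poly RF R n}) : RegP p -> RegP q -> RegP (p * q).
Proof.
move=> a b i; rewrite coefM; apply: Reg_sum => j _; exact: RegM.
Qed.
Lemma RegP_sum n (I : Type) (r : seq I) (P : pred I) (F : I -> {poly RF R n}) :
  (forall i, P i -> RegP (F i)) -> RegP (\sum_(i <- r | P i) F i).
Proof. move=> h; elim/big_ind: _ => //; [exact: RegP0 | exact: RegPD]. Qed.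
Lemma RegP_prod n (I : Type) (r : seq I) (P : pred I) (F : I -> {poly RF R n}) :
  (forall i, P i -> RegP (F i)) -> RegP (\prod_(i <- r | P i) F i).
Proof. move=> h; elim/big_ind: _ => //; [exact: RegP1 | exact: RegPM]. Qed.
Lemma RegPX_ n (p : {poly RF R n}) k : RegP p -> RegP (p ^+ k).
Proof. by move=> h; elim: k => [|k IH]; [rewrite expr0; exact: RegP1 | rewrite exprS; exact: RegPM]. Qed.

Lemma Reg_res n (A B : {poly RF R n}) m c : RegP A -> RegP B ->
  B.[0] = cst n c -> c != 0 ->
  Reg (res0 (FracField.tofrac A / FracField.tofrac ('X^m * B))).
Proof.
move=> hA hB hB0 c0.
have B0 : B.[0] != 0 by rewrite hB0 fmorph_eq0.
have Bn0 : B != 0 by apply: contraTneq B0 => ->; rewrite horner0 eqxx.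
have XB : 'X^m * B != 0 by rewrite mulf_neq0 // monic_neq0 // monicXn.
rewrite res0_frac // res0_ratio_XM // /Rm.
case: m {XB} => [|m]; first exact: Reg0.
apply: RegPM => //; rewrite /uinv hB0 -fmorphV -mul_polyC.
apply: RegPM; first by apply: RegPC; apply: Reg_cst.
apply: RegP_sum => k _; apply: RegPX_; apply: RegPB; first exact: RegP1.
by rewrite -mul_polyC; apply: RegPM => //; apply: RegPC; apply: Reg_cst.
Qed.
End RFsec.

Section Main.
Variable R : fieldType.
Variables N s : nat.
Local Notation tf := (@FracField.tofrac {poly _}).

Definition Xf n : RF R n.+1 := FracField.tofrac ('X : {poly RF R n}).
Definition hp n M : {poly RF R n} := map_poly (@cst R n) (hN R M).

Lemma mapC_X (F : fieldType) (Q : {poly F}) : (map_poly polyC Q).['X] = Q.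
Proof.
elim/poly_ind: Q => [|Q c IH]; first by rewrite rmorph0 horner0.
by rewrite rmorphD rmorphM /= map_polyX map_polyC !hornerE IH.
Qed.

Lemma hN_at_X n M : hN_at M (Xf n) = FracField.tofrac (hp n M).
Proof.
rewrite /hN_at /Xf.
have -> : map_poly (@cst R n.+1) (hN R M)
   = map_poly (@FracField.tofrac {poly RF R n}) (map_poly polyC (hp n M)).
  by rewrite /hp -!map_poly_comp; apply: eq_map_poly.
by rewrite horner_map mapC_X.
Qed.

Lemma hN_at_up n M (z : RF R n) : hN_at M (up z) = up (hN_at M z).
Proof.
rewrite /hN_at.
have -> : map_poly (@cst R n.+1) (hN R M) = map_poly (@up R n) (map_poly (@cst R n) (hN R M)).
  by rewrite -map_poly_comp; apply: eq_map_poly.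
by rewrite horner_map.
Qed.

Definition Afun (F : fieldType) (j : nat) (z : F) :=
  z ^+ (s - 1 - j) / (z ^+ s * (z - 1) ^+ (s - j)).
Definition Cn n i (z : RF R n) :=
  (z - 1) ^+ (s - 1 - i) * z ^+ i * hN_at (N - i) z.
Definition bf (F : fieldType) (x y : F) := (1 - y + x * y)^-1.

Definition Kn n i : RF R n.+1 :=
  Afun n (Xf n) * Cn i (Xf n) * \prod_(j < n) bf (up (var R n j)) (Xf n).

Definition Bp n : {poly RF R n} :=
  ('X - 1) ^+ (s - n) * \prod_(j < n) (1 + (var R n j - 1)%:P * 'X).

Definition Anum n i : {poly RF R n} :=
  'X^(s - 1 - n + i) * ('X - 1) ^+ (s - 1 - i) * hp n (N - i).

Lemma Kn_eq n i : Kn n i = tf (Anum n i) / tf ('X^s * Bp n).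
Proof.
rewrite /Kn /Afun /Cn /bf /Anum /Bp hN_at_X.
rewrite prodfV.
have -> : \prod_(j < n) (1 - Xf n + up (var R n j) * Xf n)
   = tf (\prod_(j < n) (1 + (var R n j - 1)%:P * 'X)).
  rewrite rmorph_prod; apply: eq_bigr => j _.
  rewrite rmorphD rmorphM /= rmorph1 polyCB rmorphB /= rmorph1 /Xf /up.
  ring.
rewrite !(rmorphM, rmorphXn) /= rmorphB /= rmorph1 -/(Xf n).
rewrite exprD !invfM.
ring.
Qed.

Lemma Bp0 n : (Bp n).[0] = (-1) ^+ (s - n).
Proof.
rewrite /Bp hornerM horner_exp horner_prod !hornerE.
rewrite big1 ?mulr1 // => j _; rewrite !hornerE; ring.
Qed.

Lemma Bp0_neq n : (Bp n).[0] != 0.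
Proof. by rewrite Bp0 expf_neq0 // oppr_eq0 oner_eq0. Qed.

Lemma cancel_tf n (x A B : {poly RF R n}) : x != 0 ->
  tf (x * A) / tf (x * B) = tf A / tf B.
Proof.
move=> hx; have hx' : tf x != 0 by rewrite tofrac_eq0.
by rewrite !rmorphM invfM mulrACA mulfV // mul1r.
Qed.

Lemma Kn_hol n i (G : {poly RF R n}) : (n < s)%N -> (n < i)%N ->
  res0 (Kn n i * tf G) = 0.
Proof.
move=> ns ni; rewrite Kn_eq /Anum.
have -> : (s - 1 - n + i = s + (i - n.+1))%N by lia.
rewrite exprD mulrAC -rmorphM -!mulrA cancel_tf ?monic_neq0 ?monicXn //.
exact: res0_hol (Bp0_neq n).
Qed.

Lemma RegP_hp n M : RegP (hp n M).
Proof. by move=> k; rewrite /hp coef_map; apply: Reg_cst. Qed.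

Lemma RegP_Bp n : RegP (Bp n).
Proof.
rewrite /Bp; apply: RegPM.
  by apply: RegPX_; apply: RegPB; [exact: RegPX | exact: RegP1].
apply: RegP_prod => j _; apply: RegPD; first exact: RegP1.
apply: RegPM; last exact: RegPX.
by apply: RegPC; apply: RegB; [exact: Reg_var | exact: Reg1].
Qed.

Lemma Kn_reg n i (G : {poly RF R n}) : RegP G -> Reg (res0 (Kn n i * tf G)).
Proof.
move=> hG; rewrite Kn_eq mulrAC -rmorphM.
apply: (@Reg_res _ _ _ _ _ ((-1) ^+ (s - n))).
- apply: RegPM => //; apply: RegPM; last exact: RegP_hp.
  apply: RegPM; first by apply: RegPX_; exact: RegPX.
  by apply: RegPX_; apply: RegPB; [exact: RegPX | exact: RegP1].
- exact: RegP_Bp.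
- by rewrite Bp0 rmorphXn rmorphN1.
- by rewrite expf_neq0 // oppr_eq0 oner_eq0.
Qed.

Lemma hp0 n M : (hp n M).[0] = cst n (hN R M).[0].
Proof. by rewrite !horner_coef0 /hp coef_map. Qed.

Lemma Kn_simple n : (n < s)%N -> res0 (Kn n n) = cst n (- (hN R (N - n)).[0]).
Proof.
move=> ns; rewrite Kn_eq /Anum.
have -> : (s - 1 - n + n = s.-1)%N by lia.
have -> : s = s.-1.+1 by lia.
rewrite exprSr -mulrA -mulrA cancel_tf ?monic_neq0 ?monicXn //.
rewrite res0_simple ?Bp0_neq // Bp0 hornerM horner_exp hp0 !hornerE.
have -> : (s.-1.+1 - 1 - n = s.-1 - n)%N by lia.
have -> : (s - n = (s.-1 - n).+1)%N by lia.
rewrite exprS rmorphN; set a := (-1) ^+ (s.-1 - n) : RF R n.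
have an : a != 0 by rewrite expf_neq0 // oppr_eq0 oner_eq0.
by rewrite mulN1r invrN mulrN mulrAC mulfV // mul1r.
Qed.

Lemma res0_0 (K : fieldType) : res0 (0 : {fraction {poly K}}) = 0.
Proof.
have h := res0D (0 : {fraction {poly K}}) 0; rewrite addr0 in h.
by apply: (@addrI _ (res0 (0 : {fraction {poly K}}))); rewrite addr0 -h.
Qed.

Lemma res0_up n (c : RF R n) (x : RF R n.+1) : res0 (up c * x) = c * res0 x.
Proof. exact: res0CM. Qed.

Lemma iter_res0 n : iter_res (0 : RF R n) = 0.
Proof. by elim: n => [//|n IH] /=; rewrite res0_0. Qed.

Lemma iter_resD n (x y : RF R n) : iter_res (x + y) = iter_res x + iter_res y.
Proof. by elim: n x y => [//|n IH] x y /=; rewrite res0D IH. Qed.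

Lemma iter_res_Mcst n (x : RF R n) c : iter_res (x * cst n c) = iter_res x * c.
Proof.
elim: n x => [//|n IH] x /=.
by rewrite mulrC res0_up mulrC IH.
Qed.

Fixpoint P n (f : nat -> nat) : RF R n :=
  match n return RF R n with
  | 0 => 1
  | n'.+1 => up (P n' f) * Kn n' (f n')
  end.

Lemma P_id n f : (n <= s)%N -> (forall j, (j < n)%N -> f j = j) ->
  iter_res (P n f) = \prod_(j < n) - (hN R (N - j)).[0].
Proof.
elim: n => [|n IH] ns hf; first by rewrite big_ord0.
rewrite /= res0_up hf // Kn_simple // iter_res_Mcst IH; last 2 first.
- exact: ltnW.
- by move=> j hj; apply: hf; exact: ltnW.
by rewrite big_ord_recr.
Qed.

Lemma P_van n f j0 (G : RF R n) : (n <= s)%N -> (j0 < n)%N -> (j0 < f j0)%N ->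
  Reg G -> iter_res (P n f * G) = 0.
Proof.
elim: n G => [|n IH] G ns jn jf; first by [].
case=> Gp [hG ->] /=.
rewrite -mulrA res0_up.
case: (eqVneq j0 n) => [e|ne].
  by move: jf; rewrite e => jf; rewrite Kn_hol // mulr0 iter_res0.
apply: IH; [exact: ltnW | | exact: jf | exact: Kn_reg].
by rewrite ltn_neqAle ne -ltnS.
Qed.

Lemma upM n (x y : RF R n) : up (x * y) = up x * up y.
Proof. exact: rmorphM. Qed.
Lemma up_prod n (I : Type) (r : seq I) (P : pred I) (F : I -> RF R n) :
  up (\prod_(i <- r | P i) F i) = \prod_(i <- r | P i) up (F i).
Proof. exact: rmorph_prod. Qed.

Lemma up_Afun n j (z : RF R n) : up (Afun j z) = Afun j (up z).
Proof. by rewrite /Afun !(rmorphM, rmorphXn, fmorphV, rmorphB, rmorph1). Qed.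

Lemma up_Cn n i (z : RF R n) : up (Cn i z) = Cn i (up z).
Proof. by rewrite /Cn !(rmorphM, rmorphXn, rmorphB, rmorph1) hN_at_up. Qed.

Lemma up_bf n (x y : RF R n) : up (bf x y) = bf (up x) (up y).
Proof. by rewrite /bf !(fmorphV, rmorphM, rmorphD, rmorphN, rmorphB, rmorph1). Qed.

Definition PA n (f : nat -> nat) : RF R n :=
  \prod_(j < n) (Afun j (var R n j) * Cn (f j) (var R n j)).
Definition PB n : RF R n :=
  \prod_(j < n) \prod_(k < n | (j < k)%N) bf (var R n j) (var R n k).

Lemma PA_rec n f : PA n.+1 f = up (PA n f) * (Afun n (Xf n) * Cn (f n) (Xf n)).
Proof.
rewrite /PA big_ord_recr /= up_prod eqxx; congr (_ * _).
apply: eq_bigr => j _; rewrite (ltn_eqF (ltn_ord j)).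
by rewrite upM up_Afun up_Cn.
Qed.

Lemma PB_rec n : PB n.+1 = up (PB n) * \prod_(j < n) bf (up (var R n j)) (Xf n).
Proof.
rewrite /PB big_ord_recr /=.
rewrite [X in _ * X]big1 ?mulr1; last first.
  by move=> k; rewrite ltnNge -ltnS ltn_ord.
rewrite up_prod -big_split /=; apply: eq_bigr => j _.
rewrite big_mkcond big_ord_recr /= ltn_ord -big_mkcond /=.
rewrite eqxx (ltn_eqF (ltn_ord j)); congr (_ * _).
rewrite up_prod; apply: eq_bigr => k _.
by rewrite up_bf (ltn_eqF (ltn_ord k)).
Qed.

Lemma P_PP n f : P n f = PA n f * PB n.
Proof.
elim: n => [|n IH]; first by rewrite /PA /PB !big_ord0 mulr1.
rewrite /= IH PA_rec PB_rec upM /Kn.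
set a := up (PA n f); set b := up (PB n); set c := Afun _ _; set d := Cn _ _.
set e := \prod_(j < n) _.
clearbody a b c d e.
by rewrite -!mulrA; congr (_ * _); rewrite mulrCA; congr (_ * _); rewrite mulrCA.
Qed.
End Main.

Section Fin.
Variable R : fieldType.

Lemma var_neq n (i j : nat) : (i < j)%N -> (j < n)%N -> var R n i != var R n j.
Proof.
elim: n i j => [//|n IH] i j ij jn.
case: (eqVneq j n) => [ej|nej].
  rewrite ej var_top var_up ?ltn_eqF -?ej // /up tofrac_eq.
  apply/eqP => h; have := congr1 (fun p : {poly _} => size p) h; rewrite /= size_polyX size_polyC.
  by case: (_ != 0).
have jn' : (j < n)%N by rewrite ltn_neqAle nej -ltnS.
rewrite !var_up ?ltn_eqF //; last exact: ltn_trans ij jn'.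
rewrite /up tofrac_eq (inj_eq polyC_inj); exact: IH.
Qed.

Lemma prod_neg n (F : nat -> R) :
  \prod_(j < n) - F j = (-1) ^+ n * \prod_(j < n) F j.
Proof.
elim: n => [|n IH]; first by rewrite !big_ord0 mulr1.
rewrite !big_ord_recr /= IH exprSr. set P := \prod_(j < n) _. clearbody P.
by rewrite mulrN1 mulNr mulrN mulrA.
Qed.

Lemma perm_up n (t : 'S_n) : t != 1%g -> exists j : 'I_n, (j < t j)%N.
Proof.
move=> ht; case: (boolP [exists j : 'I_n, (j < t j)%N]) => [/existsP //|].
rewrite negb_exists => /forallP hle; exfalso; apply/negP: ht; rewrite negbK.
have key : forall k (j : 'I_n), (j < k)%N -> t j = j.
  elim=> [//|k IHk] j; rewrite ltnS leq_eqVlt => /orP [/eqP jk|]; last exact: IHk.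
  have : (t j <= j)%N by rewrite leqNgt hle.
  rewrite leq_eqVlt => /orP [/eqP e|lt]; first exact: val_inj.
  have e2 : t (t j) = t j by apply: IHk; rewrite -jk.
  by move/perm_inj: e2 => e2; rewrite e2 ltnn in lt.
apply/eqP/permP => j; rewrite perm1; exact: (key j.+1).
Qed.

Lemma Jfun_expand (N s' : nat) :
  Jfun R N s'.+1 = \sum_(t : 'S_s'.+1) (-1) ^+ t *
     P R N s'.+1 s'.+1 (fun j => nat_of_ord ((t^-1)%g (inord j))).
Proof.
set s := s'.+1.
rewrite /Jfun /hNs.
set z := var R s.
set V := \prod_(i < s) \prod_(j < s | (i < j)%N) (z i - z j).
have Vn0 : V != 0.
  apply/prodf_neq0 => i _; apply/prodf_neq0 => j ij.
  by rewrite subr_eq0; apply: var_neq.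
have -> : \prod_(j < s) \prod_(k < s | (j < k)%N) ((z j - z k) / (1 - z k + z j * z k))
    = V * PB R s.
  rewrite /V /PB -big_split; apply: eq_bigr => j _.
  by rewrite -big_split.
set AA := \prod_(j < s) _.
set D := \det _.
have e : forall a b c d : RF R s, c != 0 -> a * (c * b) * (d / c) = a * b * d.
  by move=> a b c d hc; rewrite [c * _]mulrC [a * (b * c)]mulrA mulrACA mulfV // mulr1.
rewrite e //.
rewrite /D /determinant mulr_sumr; apply: eq_bigr => t _.
rewrite mulrCA; congr (_ * _).
rewrite P_PP /PA big_split /= -/z mulrAC; congr (_ * _).
rewrite -/AA; congr (_ * _).
rewrite (reindex_inj (@perm_inj _ (t^-1)%g)) /=.
apply: eq_bigr => j _; rewrite mxE permKV inord_val //.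
Qed.
End Fin.

Theorem lemma2_gen (R : fieldType) (N s : nat) :
  (1 <= N)%N -> (1 <= s)%N -> (s <= N)%N ->
  iter_res (Jfun R N s) = (-1) ^+ s * \prod_(i < s) (hN R (N - i)).[0].
Proof.
case: s => [//|s'] _ _ sN.
rewrite Jfun_expand.
rewrite (big_morph _ (@iter_resD R s'.+1) (iter_res0 R s'.+1)).
rewrite (bigD1 1%g) // big1 ?addr0.
  rewrite odd_perm1 expr0 mul1r invg1.
  rewrite (@P_id R N s'.+1 s'.+1) //; first by rewrite (prod_neg _ (fun j => (hN R (N - j)).[0])); exact: addr0.
  by move=> j hj; rewrite perm1 inordK.
move=> t ht.
rewrite mulrC -(rmorph_sign (@cst R s'.+1)) iter_res_Mcst.
have ht' : (t^-1)%g != 1%g by rewrite eq_invg1.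
have [j hj] := perm_up ht'.
rewrite -[P _ _ _ _ _]mulr1 (@P_van R N s'.+1 s'.+1 _ j) ?mul0r //.
- by rewrite inord_val.
- exact: Reg1.
Qed.

Theorem lemma2 (R : numFieldType) (N s : nat) :
  (1 <= N)%N -> (1 <= s)%N -> (s <= N)%N ->
  iter_res (Jfun R N s) = (-1) ^+ s * \prod_(i < s) (hN R (N - i)).[0].
Proof. exact: lemma2_gen. Qed.
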